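(* Let $G=(V,E)$ be a finite undirected graph with $V=\{1,\dots,p\}$. Then the following are equivalent: (i) for every symmetric positive semidefinite $p\times p$ real matrix $A$ with $\det A=0$, the thresholded matrix $A_G$ is positive semidefinite; (ii) $G=\bigcup_{i=1}^{\tau} G_i$ for some $\tau\in\mathbb{N}$, where $G_1,\dots,G_\tau$ are pairwise disconnected complete graphs (equivalently, every connected component of $G$ is a complete graph).
   Context: For a symmetric $p\times p$ real matrix $A=(a_{ij})$ and an undirected graph $G=(V,E)$ on $V=\{1,\dots,p\}$, the matrix $A_G$ is defined by $(A_G)_{ij}=a_{ij}$ if $i=j$ or $(i,j)\in E$, and $(A_G)_{ij}=0$ otherwise. *)

(* Defs.v *)
From mathcomp Require Import all_boot all_order all_algebra.
From mathcomp Require Import reals.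
Set Implicit Arguments. Unset Strict Implicit. Unset Printing Implicit Defensive.
Import Order.TTheory GRing.Theory Num.Theory.
Local Open Scope ring_scope.

Definition simple_graph (p : nat) (e : rel 'I_p) : Prop :=
  symmetric e /\ irreflexive e.

Definition psd {R : realType} {p : nat} (A : 'M[R]_p) : Prop :=
  A^T = A /\ forall v : 'cV[R]_p, 0 <= (v^T *m A *m v) 0 0.

Definition threshold {R : realType} {p : nat} (e : rel 'I_p) (A : 'M[R]_p)
  : 'M[R]_p :=
  \matrix_(i, j) (if (i == j) || e i j then A i j else 0).

Definition components_complete (p : nat) (e : rel 'I_p) : Prop :=
  forall i j : 'I_p, connect e i j -> i != j -> e i j.

(* Main.v *)
Require Import Defs.
From mathcomp Require Import all_boot all_order all_algebra.
From mathcomp Require Import reals.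
From mathcomp Require Import ring lra.
Import Order.TTheory GRing.Theory Num.Theory.
Local Open Scope ring_scope.

Lemma qformE (R : realType) (p : nat) (A : 'M[R]_p) (v : 'cV[R]_p) :
  (v^T *m A *m v) 0 0 = \sum_i \sum_j v i 0 * A i j * v j 0.
Proof.
rewrite mxE exchange_big; apply: eq_bigr => j _; rewrite mxE big_distrl /=.
by apply: eq_bigr => i _; rewrite !mxE.
Qed.

Lemma sum3 (R : realType) (p : nat) (a b c : 'I_p) (g : 'I_p -> R) :
  a != b -> b != c -> a != c ->
  (forall i, i != a -> i != b -> i != c -> g i = 0) ->
  \sum_i g i = g a + g b + g c.
Proof.
move=> ab bc ac H.
rewrite (bigD1 a) // (bigD1 b) /=; last by rewrite eq_sym ab.
rewrite (bigD1 c) /=; last by rewrite eq_sym ac eq_sym bc.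
rewrite big1 ?addr0 ?addrA // => i /andP[/andP[ia ib] ic].
exact: H.
Qed.

Lemma p3 (p : nat) (e : rel 'I_p) : forall s x, path e x s ->
  x != last x s -> ~~ e x (last x s) ->
  exists a b c, [/\ e a b, e b c, a != c & ~~ e a c].
Proof.
elim=> [|z s IH] x /=; first by rewrite eqxx.
move=> /andP[exz pzs] neq nexy.
case: (boolP (e z (last z s))) => h; first by exists x, z, (last z s).
case: (eqVneq z (last z s)) => hz.
  by rewrite -hz exz in nexy.
exact: (IH z pzs hz h).
Qed.

Theorem corollary3 (R : realType) (p : nat) (e : rel 'I_p) :
  simple_graph e ->
  ((forall A : 'M[R]_p, psd A -> \det A = 0 -> psd (threshold e A))
   <-> components_complete e).
Proof.
move=> [esym eirr]; split.
- move=> H i0 j0 cij nij; apply/negPn/negP => neij.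
  case/connectP: cij => s ps jl; subst j0.
  have [a [b [c [eab ebc nac neac]]]] := p3 _ e s i0 ps nij neij.
  have nab : a != b by apply/eqP => h; rewrite h eirr in eab.
  have nbc : b != c by apply/eqP => h; rewrite h eirr in ebc.
  have nba : b != a by rewrite eq_sym.
  have nca : c != a by rewrite eq_sym.
  have ncb : c != b by rewrite eq_sym.
  pose s3 := fun i : 'I_p => if (i == a) || (i == b) || (i == c) then (1:R) else 0.
  pose A := \matrix_(i, j) (s3 i * s3 j).
  have psdA : psd A.
    split; first by apply/matrixP => i j; rewrite !mxE mulrC.
    move=> v; rewrite qformE.
    have -> : \sum_i \sum_j v i 0 * A i j * v j 0 =
              (\sum_i v i 0 * s3 i) * (\sum_j v j 0 * s3 j).
      rewrite mulr_suml; apply: eq_bigr => i _; rewrite mulr_sumr.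
      by apply: eq_bigr => j _; rewrite mxE; ring.
    by rewrite -expr2 sqr_ge0.
  have detA : \det A = 0.
    apply/eqP/det0P.
    exists (\row_i (if i == a then (1:R) else if i == b then -1 else 0)).
      apply/eqP => /matrixP /(_ 0 a); rewrite !mxE eqxx => /eqP; by rewrite oner_eq0.
    apply/matrixP => k j; rewrite !mxE.
    rewrite (@sum3 _ _ a b c _ nab nbc nac); last first.
      by move=> i ia ib ic; rewrite !mxE (negbTE ia) (negbTE ib) mul0r.
    rewrite !mxE !eqxx /s3 !eqxx /= (negbTE nba) (negbTE nca) (negbTE ncb) /= ?orbT; ring.
  have [_ /(_ (\col_i (if i == a then 1 else if i == b then -1 else if i == c then 1 else 0)))]
    := H A psdA detA.
  rewrite qformE.
  have z : forall i, i != a -> i != b -> i != c ->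
    (\col_i (if i == a then (1:R) else if i == b then -1 else if i == c then 1 else 0)) i 0 = 0.
    by move=> i ia ib ic; rewrite mxE (negbTE ia) (negbTE ib) (negbTE ic).
  rewrite (@sum3 _ _ a b c _ nab nbc nac); last first.
    by move=> i ia ib ic; apply: big1 => j _; rewrite (z i) // !mul0r.
  rewrite !(@sum3 _ _ a b c _ nab nbc nac); try by move=> j ja jb jc; rewrite (z j) // mulr0.
  rewrite !mxE !eqxx /s3 !eqxx /=.
  rewrite (negbTE nab) (negbTE nba) (negbTE nac) (negbTE nca) (negbTE nbc) (negbTE ncb) /=.
  rewrite eab ebc (negbTE neac) (esym c a) (esym b a) (esym c b) eab ebc (negbTE neac) /=.
  move=> h; lra.
- move=> cc A [AT Apsd] _.
  have csym := sym_connect_sym esym.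
  split.
    apply/matrixP => i j; rewrite !mxE (eq_sym j i) (esym j i).
    by rewrite -{1}AT mxE.
  move=> v; rewrite qformE.
  pose w k := \col_i (if fingraph.root e i == k then v i 0 else 0).
  have -> : \sum_i \sum_j v i 0 * threshold e A i j * v j 0 =
            \sum_k \sum_i \sum_j w k i 0 * A i j * w k j 0.
    rewrite [RHS]exchange_big /=; apply: eq_bigr => i _.
    rewrite [RHS]exchange_big /=; apply: eq_bigr => j _.
    rewrite (bigD1 (fingraph.root e i)) //= big1 => [|k hk]; last first.
      by move: hk; rewrite eq_sym => hk; rewrite mxE (negbTE hk) !mul0r.
    rewrite !mxE eqxx addr0 root_connect //.
    have -> : (i == j) || e i j = connect e i j.
      case: (eqVneq i j) => [->|nij] /=; first by rewrite connect0.
      by apply/idP/idP; [exact: connect1 | move=> c; exact: cc].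
    by case: (boolP (connect e i j)) => h; rewrite (csym j i) ?h ?(negbTE h) ?mulr0 ?mul0r.
  apply: sumr_ge0 => k _. rewrite -(@qformE R p A (w k)). exact: Apsd.
Qed.
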